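(* Fix a master $m$ with $L_m>0$ and a finite nonempty set $\Omega_m$ of workers serving it, with parameters $u_{m,n}>0$, $a_{m,n}>0$ for $n\in\Omega_m$. Consider the problem $$\min_{\{l_{m,n}\}_{n\in\Omega_m},\,t_m} \; t_m \quad\text{s.t.}\quad L_m-\sum_{n\in\Omega_m} l_{m,n}\left(1-e^{-\frac{u_{m,n}}{l_{m,n}}\left(t_m-a_{m,n}l_{m,n}\right)}\right)\le 0,\qquad l_{m,n}\ge 0\ \ \forall n\in\Omega_m.$$ For each $n\in\Omega_m$ define $$\phi_{m,n}=\frac{1}{u_{m,n}}\left[-\mathcal{W}_{-1}\!\left(-e^{-u_{m,n}a_{m,n}-1}\right)-1\right],$$ where $\mathcal{W}_{-1}$ is the lower branch of the Lambert W function (i.e. for $x\le -1$, $\mathcal{W}_{-1}(xe^x)=x$). Then the optimal load allocation and the minimum approximate completion time are $$l^*_{m,n}=\frac{L_m}{\phi_{m,n}\sum_{n'\in \Omega_m} \frac{u_{m,n'}}{1+u_{m,n'}\phi_{m,n'}}},\qquad t_m^*= \frac{L_m}{\sum_{n'\in \Omega_m} \frac{u_{m,n'}}{1+u_{m,n'}\phi_{m,n'}}}.$$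
   Context: Setting: master $m$ needs $L_m$ results (products of MDS-coded rows of its matrix with its vector); worker $n\in\Omega_m$ is allocated $l_{m,n}$ coded rows, and the time for worker $n$ to process $l$ rows is a shifted exponential random variable with $\mathbb{P}[T\le t]=1-e^{-\frac{u_{m,n}}{l}(t-a_{m,n}l)}$ for $t\ge a_{m,n}l$ and $0$ otherwise. The constraint says the expected number of results received by time $t_m$ is at least $L_m$; load values are treated as nonnegative reals. *)

(* Defs.v *)
From HB Require Import structures.
From mathcomp Require Import all_boot all_order all_algebra.
From mathcomp Require Import all_classical all_reals all_analysis.
Set Implicit Arguments. Unset Strict Implicit. Unset Printing Implicit Defensive.
Import Order.TTheory GRing.Theory Num.Theory.
Local Open Scope ring_scope.
Local Open Scope classical_set_scope.

(* Lower branch of the Lambert W function: W_{-1}(y) is the (unique, for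
   -1/e <= y < 0) x <= -1 with x * e^x = y.  Chosen via xget (default 0 if
   no such x exists). *)
Definition LambertWm1 {R : realType} (y : R) : R :=
  xget 0 [set x : R | x <= -1 /\ x * expR x = y].

Definition phi {R : realType} (u a : R) : R :=
  u^-1 * (- LambertWm1 (- expR (- (u * a) - 1)) - 1).

Definition expected_results {R : realType} (u a l t : R) : R :=
  l * (1 - expR (- (u / l) * (t - a * l))).

Definition feasible {R : realType} {Omega : finType} (L : R) (u a : Omega -> R)
    (l : Omega -> R) (t : R) : Prop :=
  L - \sum_(n : Omega) expected_results (u n) (a n) (l n) t <= 0 /\
  (forall n, 0 <= l n).

(* Main.v *)
Require Import Defs.
From HB Require Import structures.
From mathcomp Require Import all_boot all_order all_algebra.
From mathcomp Require Import all_classical all_reals all_analysis.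
From mathcomp Require Import ring lra.
Import Order.TTheory GRing.Theory Num.Theory numFieldNormedType.Exports.
Local Open Scope ring_scope.

Lemma lambert_ex (R : realType) (c : R) : 0 < c ->
  exists x : R, x <= -1 /\ x * expR x = - expR (- c - 1).
Proof.
move=> hc.
set E := expR (c + 1).
have hE : 0 < E by apply: expR_gt0.
set z := 4 * E + 1.
have hz : 0 < z by rewrite /z; lra.
have hez : z * E <= expR z.
  have -> : z = z / 2 + z / 2 by field.
  rewrite expRD.
  have h1 := expR_ge1Dx (z / 2).
  have h2 : 0 <= 1 + z / 2 by lra.
  have h3 : (1 + z/2) * (1 + z/2) <= expR (z/2) * expR (z/2).
    by apply: ler_pM => //.
  have h4 : (z / 2 + z / 2) * E <= (1 + z/2) * (1 + z/2).
    have -> : z / 2 + z / 2 = z by field.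
    rewrite /z; nra.
  lra.
have hv : - expR (- c - 1) <= (- z) * expR (- z).
  rewrite expRN mulNr lerN2.
  have -> : expR (- c - 1) = E^-1 by rewrite -expRN /E; congr expR; ring.
  rewrite -(ler_pM2r (expR_gt0 z)).
  rewrite divfK ?gt_eqF ?expR_gt0 //.
  rewrite -(ler_pM2l hE) mulrA mulfV ?gt_eqF // mul1r mulrC //.
have hw : (- 1) * expR (- 1) <= - expR (- c - 1).
  rewrite mulN1r lerN2 ler_expR.
by rewrite -[X in _ <= X]add0r lerD2r oppr_le0 ltW.
have hab : - z <= - 1 by rewrite /z; lra.
have [||w] := @IVT R (fun x => x * expR x) (- z) (- 1) (- expR (- c - 1)) hab.
- have cM : continuous (fun x : R => x * expR x).
    move=> x; apply: cvgM; [exact: cvg_id | exact: continuous_expR].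
  exact: continuous_subspaceT cM.
- by rewrite /= ge_min le_max hw hv !orbT.
rewrite in_itv /= => /andP [_ hx] hxe.
by exists w.
Qed.

Lemma phi_prop (R : realType) (u a : R) : 0 < u -> 0 < a ->
  0 < phi u a /\ expR (u * a - u * phi u a) * (1 + u * phi u a) = 1.
Proof.
move=> hu ha.
have hua : 0 < u * a by apply: mulr_gt0.
have := xgetPex 0 (@lambert_ex R _ hua).
rewrite /phi /LambertWm1.
set W := xget _ _ => -[hW1 hW2].
have hup : u * (u^-1 * (- W - 1)) = - W - 1 by rewrite mulVKf ?gt_eqF.
have hWn : W != -1.
  apply/eqP => hW; move: hW2; rewrite hW mulN1r => /oppr_inj /expR_inj; lra.
have hW3 : W < -1 by rewrite lt_neqAle hWn hW1.
split.
  apply: mulr_gt0; [by rewrite invr_gt0 | lra].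
rewrite hup.
have -> : u * a - (- W - 1) = W + (u * a + 1) by ring.
rewrite expRD.
have -> : expR W * expR (u * a + 1) * (1 + (- W - 1)) =
          - (W * expR W) * expR (u * a + 1) by ring.
rewrite hW2 opprK -expRD.
have -> : - (u * a) - 1 + (u * a + 1) = 0 by ring.
by rewrite expR0.
Qed.
Lemma bound_pos (R : realType) (u a p l t : R) : 0 < u -> 0 < p -> 0 <= l -> 0 < t ->
  expR (u * a - u * p) * (1 + u * p) = 1 ->
  expected_results u a l t <= t * (u / (1 + u * p)).
Proof.
move=> hu hp hl ht hk.
set k := expR (u * a - u * p).
have hkp : 0 < k by apply: expR_gt0.
have hq : 0 < 1 + u * p by have := mulr_gt0 hu hp; lra.
have hc : u / (1 + u * p) = u * k.
  have hk' : k = 1 * (1 + u * p)^-1 := canRL (mulfK (lt0r_neq0 hq)) hk.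
  by rewrite hk' mul1r.
rewrite hc /expected_results.
case: (eqVneq l 0) => [->|hl0]; first by rewrite mul0r; apply: mulr_ge0 => //; [lra| apply: mulr_ge0; lra].
have hlp : 0 < l by rewrite lt_neqAle eq_sym hl0 hl.
have ey : expR (- (u / l) * (t - a * l)) = k * expR (u * p - u * t / l).
  rewrite /k -expRD; congr expR; field; exact: hl0.
rewrite ey.
have h1 := expR_ge1Dx (u * p - u * t / l).
have h2 : l * k * (1 + (u * p - u * t / l)) = l - k * u * t.
  have -> : l * k * (1 + (u * p - u * t / l)) = l * (k * (1 + u * p)) - k * u * t * (l / l) by ring.
  by rewrite hk divff // mulr1 mulr1.
have h3 : l * k * (1 + (u * p - u * t / l)) <= l * k * expR (u * p - u * t / l).
  by apply: ler_wpM2l => //; apply: mulr_ge0; lra.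
have -> : l * (1 - k * expR (u * p - u * t / l)) = l - l * k * expR (u * p - u * t / l) by ring.
have -> : t * (u * k) = k * u * t by ring.
lra.
Qed.

Lemma bound_npos (R : realType) (u a l t : R) : 0 < u -> 0 < a -> 0 <= l -> t <= 0 ->
  expected_results u a l t <= 0.
Proof.
move=> hu ha hl ht; rewrite /expected_results.
case: (eqVneq l 0) => [->|hl0]; first by rewrite mul0r.
have hlp : 0 < l by rewrite lt_neqAle eq_sym hl0 hl.
have hx : 0 <= - (u / l) * (t - a * l).
  rewrite mulNr -mulrN; apply: mulr_ge0; first by apply: divr_ge0; lra.
  have := mulr_gt0 ha hlp; lra.
have := expR_ge1Dx (- (u / l) * (t - a * l)).
move=> h; apply: mulr_ge0_le0; lra.
Qed.
Theorem theorem1 (R : realType) (Omega : finType) (L : R) (u a : Omega -> R) :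
  (0 < #|Omega|)%N -> 0 < L ->
  (forall n, 0 < u n) -> (forall n, 0 < a n) ->
  let S := \sum_(n' : Omega) u n' / (1 + u n' * phi (u n') (a n')) in
  let lstar := fun n => L / (phi (u n) (a n) * S) in
  let tstar := L / S in
  feasible L u a lstar tstar /\
  (forall (l : Omega -> R) (t : R), feasible L u a l t -> tstar <= t).
Proof.
move=> hO hL hu ha S lstar tstar.
have hP n := @phi_prop R _ _ (hu n) (ha n).
have hq n : 0 < 1 + u n * phi (u n) (a n).
  have := mulr_gt0 (hu n) (hP n).1; lra.
have hc n : 0 < u n / (1 + u n * phi (u n) (a n)).
  by apply: divr_gt0 => //; exact: hq.
have hS : 0 < S.
  case/card_gt0P: hO => n0 _.
  rewrite /S (bigD1 n0) //=.
  have : 0 <= \sum_(i | i != n0) u i / (1 + u i * phi (u i) (a i)).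
    by apply: sumr_ge0 => i _; apply: ltW.
  have := hc n0; lra.
split.
  split; last first.
    move=> n; rewrite /lstar; apply: divr_ge0; first lra.
    by apply: mulr_ge0; apply: ltW => //; exact: (hP n).1.
  have ex n : expected_results (u n) (a n) (lstar n) tstar
      = L / S * (u n / (1 + u n * phi (u n) (a n))).
    have [hp hk] := hP n.
    set p := phi (u n) (a n) in hp hk *.
    set k := expR (u n * a n - u n * p) in hk.
    have hk' : k = 1 * (1 + u n * p)^-1 := canRL (mulfK (lt0r_neq0 (hq n))) hk.
    rewrite /expected_results /lstar /tstar -/p.
    have -> : - (u n / (L / (p * S))) * (L / S - a n * (L / (p * S)))
        = u n * a n - u n * p.
      field; rewrite ?lt0r_neq0 //.
    rewrite -/k hk' mul1r.
    field; rewrite ?lt0r_neq0 //; exact: hq.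
  rewrite (eq_bigr _ (fun n _ => ex n)) -mulr_sumr -/S divfK ?lt0r_neq0 //.
  lra.
move=> l t [hf hl].
case: (lerP t 0) => ht.
  have : \sum_n expected_results (u n) (a n) (l n) t <= \sum_(n : Omega) (0 : R).
    by apply: ler_sum => n _; apply: (@bound_npos R).
  rewrite big1_eq; lra.
have : \sum_n expected_results (u n) (a n) (l n) t <= t * S.
  rewrite /S mulr_sumr; apply: ler_sum => n _.
  by apply: (@bound_pos R) => //; [exact: (hP n).1 | exact: (hP n).2].
move=> h.
rewrite /tstar ler_pdivrMr //; lra.
Qed.
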